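(* Let $m\ge2$ and let $(S,\mu^{(m)})$ be a commutative $m$-ary semigroup, and let $\sim_m$ be the equivalence relation on $S\times S$ given by $(a_1,b_1)\sim_m(a_2,b_2)$ iff there exist $x,y\in S$ with $\mu^{(m)}[a_1^{m-1},x]=\mu^{(m)}[a_2^{m-1},y]$ and $\mu^{(m)}[b_1^{m-1},x]=\mu^{(m)}[b_2^{m-1},y]$. Denote the class of $(a,b)$ by $[a,b]$. Then the componentwise $m$-ary operation $\widetilde{\boldsymbol\mu}^{(m)}\big[[a_1,b_1],\dots,[a_m,b_m]\big]=\big[\mu^{(m)}[a_1,\dots,a_m],\ \mu^{(m)}[b_1,\dots,b_m]\big]$ is well defined on $(S\times S)/\sim_m$, and with the unary operation $\overline{[a,b]}=\big[\mu^{(m)}[a,b^{m-1}],\ \mu^{(m)}[a^{m-1},b]\big]$ one has $\widetilde{\boldsymbol\mu}^{(m)}\big[\widetilde{\mathfrak S}^{\,m-1},\overline{\widetilde{\mathfrak S}}\big]=\widetilde{\mathfrak S}$ for every class $\widetilde{\mathfrak S}$ (with $\overline{\widetilde{\mathfrak S}}$ in any place); consequently $\big((S\times S)/\sim_m,\widetilde{\boldsymbol\mu}^{(m)}\big)$ is an $m$-ary group with querelement map $\widetilde{\mathfrak S}\mapsto\overline{\widetilde{\mathfrak S}}$.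
   Context: An $m$-ary semigroup is a set with a totally associative $m$-ary operation; commutative means invariant under all permutations of arguments. $a^k$ in a bracket denotes $a$ repeated $k$ times. An $m$-ary group is an $m$-ary semigroup in which each equation $\mu^{(m)}[\mathbf u,h,\mathbf t]=g$ has a unique solution $h$ for every place of $h$; the querelement $\bar g$ of $g$ is the unique solution of $\mu^{(m)}[g^{m-1},\bar g]=g$ (with $\bar g$ in any place). *)

(* Defs.v *)
From Stdlib Require Import ClassicalEpsilon Permutation.
From mathcomp Require Import all_boot.
Set Implicit Arguments. Unset Strict Implicit. Unset Printing Implicit Defensive.

(* An m-ary operation on S is represented by mu : seq S -> S, of which only
   the values on sequences of length m are relevant. *)
Section Mary.
Variables (S : Type) (m : nat) (mu : seq S -> S).

Definition mary_assoc : Prop :=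
  forall (i j : nat) (s : seq S), size s = (2 * m).-1 -> i < m -> j < m ->
    mu (take i s ++ mu (take m (drop i s)) :: drop (i + m) s)
    = mu (take j s ++ mu (take m (drop j s)) :: drop (j + m) s).

Definition mary_comm : Prop :=
  forall s t : seq S, size s = m -> Permutation s t -> mu s = mu t.

Definition mary_group : Prop :=
  mary_assoc /\
  forall (u t : seq S) (g : S), size u + size t = m.-1 ->
    exists! h : S, mu (u ++ h :: t) = g.

Definition is_querelement_map (qbar : S -> S) : Prop :=
  forall (g : S) (i : nat), i < m ->
    mu (nseq i g ++ qbar g :: nseq (m.-1 - i) g) = g.

Definition simm (p q : S * S) : Prop :=
  exists x y : S,
    mu (rcons (nseq m.-1 p.1) x) = mu (rcons (nseq m.-1 q.1) y) /\
    mu (rcons (nseq m.-1 p.2) x) = mu (rcons (nseq m.-1 q.2) y).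

Record quot : Type := Quot {
  qset : S * S -> Prop;
  qsetP : exists p : S * S, qset = simm p }.

Definition cls (p : S * S) : quot := @Quot (simm p) (ex_intro _ p erefl).

Definition rep (X : quot) : S * S :=
  proj1_sig (constructive_indefinite_description _ (qsetP X)).

Definition qmu (l : seq quot) : quot :=
  cls (mu (map (fun X => (rep X).1) l), mu (map (fun X => (rep X).2) l)).

Definition qbar (X : quot) : quot :=
  let p := rep X in
  cls (mu (p.1 :: nseq m.-1 p.2), mu (rcons (nseq m.-1 p.1) p.2)).

End Mary.

Arguments simm {S} m mu p q.
Arguments cls {S} m mu p.
Arguments qmu {S} m mu l.
Arguments qbar {S} m mu X.
Arguments quot {S} m mu.
Arguments mary_group {S} m mu.
Arguments is_querelement_map {S} m mu qbar.
Arguments mary_assoc {S} m mu.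
Arguments mary_comm {S} m mu.

(* Main.v *)
Require Import Defs.
From Stdlib Require Import ClassicalEpsilon Permutation.
From mathcomp Require Import all_boot zify.
Set Implicit Arguments. Unset Strict Implicit. Unset Printing Implicit Defensive.

Lemma size_len T (l : seq T) : length l = size l.
Proof. by elim: l => //= x l ->. Qed.

Lemma Perm_size T (s t : seq T) : Permutation s t -> size s = size t.
Proof. by move=> /Permutation_length; rewrite !size_len. Qed.

Lemma swap_perm T X (f : seq T -> X) n :
  (forall p x y q, size p + (size q).+2 = n -> f (p ++ x :: y :: q) = f (p ++ y :: x :: q)) ->
  forall s t, size s = n -> Permutation s t -> f s = f t.
Proof.
move=> H s t Hs Pst.
suff: forall p, size p + size s = n -> f (p ++ s) = f (p ++ t) by move=> /(_ [::]); apply.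
elim: Pst {Hs} => [//|x l l' P IH|x y l|l l' l'' P1 IH1 P2 IH2] p Hp.
- by rewrite -!cat_rcons; apply: IH; rewrite size_rcons /=; move: Hp => /=; lia.
- by rewrite H.
- rewrite IH1 // IH2 //; by rewrite -(Perm_size P1).
Qed.
Lemma app_cat T (l1 l2 : seq T) : (l1 ++ l2)%list = l1 ++ l2.
Proof. by elim: l1 => //= x l ->. Qed.
Section Red.
Variables (S : Type) (m : nat) (mu : seq S -> S).
Hypotheses (m2 : 2 <= m) (Hassoc : mary_assoc m mu) (Hcomm : mary_comm m mu).

Fixpoint red (k : nat) (s : seq S) : S :=
  if k is k'.+1 then red k' (mu (take m s) :: drop m s) else head (mu [::]) s.

Lemma assoc_last r : size r = (2 * m).-1 ->
  mu (mu (take m r) :: drop m r) = mu (take m.-1 r ++ [:: mu (drop m.-1 r)]).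
Proof.
move=> Hr.
have := Hassoc Hr (_ : 0 < m) (_ : m.-1 < m).
rewrite take0 drop0 add0n /= => ->; try lia.
rewrite (@take_oversize _ m); last by rewrite size_drop; lia.
by rewrite (@drop_oversize _ (m.-1 + m)) //; lia.
Qed.

Lemma shift p z w v : size p = m.-1 -> size v = m.-2 ->
  mu (mu (rcons p z) :: w :: v) = mu (rcons p (mu (z :: w :: v))).
Proof.
move=> Hp Hv.
have := assoc_last (r := p ++ z :: w :: v).
rewrite (take_size_cat _ Hp) (drop_size_cat _ Hp) size_cat /= Hp Hv.
have -> : m = (size p).+1 by lia.
rewrite take_cat drop_cat (_ : (size p).+1 < size p = false) ?subSnn /= ?cats1; last lia.
by apply; lia.
Qed.

Lemma swap_across p x y v : size p = m.-1 -> size v = m.-2 ->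
  mu (mu (rcons p x) :: y :: v) = mu (mu (rcons p y) :: x :: v).
Proof.
move=> Hp Hv; rewrite !shift //; congr (mu (rcons p _)); apply: Hcomm; first by rewrite /= Hv; lia.
exact: perm_swap.
Qed.
End Red.
Lemma take_catR T n (p s : seq T) : size p <= n -> take n (p ++ s) = p ++ take (n - size p) s.
Proof. by move=> h; rewrite take_cat ltnNge h. Qed.
Lemma drop_catR T n (p s : seq T) : size p <= n -> drop n (p ++ s) = drop (n - size p) s.
Proof. by move=> h; rewrite drop_cat ltnNge h. Qed.
Lemma drop_catL T n (p s : seq T) : n <= size p -> drop n (p ++ s) = drop n p ++ s.
Proof.
move=> h; rewrite drop_cat; case: ltnP => // h2.
have -> : n = size p by apply/eqP; rewrite eqn_leq h h2.
by rewrite subnn drop0 drop_size.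
Qed.

Section Red2.
Variables (S : Type) (m : nat) (mu : seq S -> S).
Hypotheses (m2 : 2 <= m) (Hassoc : mary_assoc m mu) (Hcomm : mary_comm m mu).
Local Notation red := (red m mu).

Lemma red_perm k s t : size s = (k * m.-1).+1 -> Permutation s t -> red k s = red k t.
Proof.
elim: k s t => [|k IH] s t Hs P.
  case: s Hs P => [|x [|]] //= _ P; by rewrite (Permutation_length_1_inv P).
apply: (swap_perm (f := red k.+1) _ Hs P) => {s t Hs P} p x y q Hpq /=.
case: (ltnP (size p).+1 m) => h1.
  rewrite !take_catR ?drop_catR; try lia.
  have -> : m - size p = (m - size p - 2).+2 by lia.
  rewrite /=; f_equal; f_equal; apply: Hcomm.
    by rewrite size_cat /= size_take; case: ifP; lia.
  by apply: Permutation_app_head; apply: perm_swap.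
case: (ltnP (size p) m) => h2.
  have hp : size p = m.-1 by lia.
  rewrite !take_catR ?drop_catR; try lia.
  have -> : m - size p = 1 by lia.
  rewrite /= !cats1.
  case: k IH Hpq => [|k] IH Hpq; first lia.
  rewrite /= -(cat_take_drop m.-2 q).
  have hq : size (take m.-2 q) = m.-2 by rewrite size_take; case: ifP; lia.
  have hm : m = m.-2.+2 by lia.
  have E a b : take m [:: a, b & take m.-2 q ++ drop m.-2 q] = [:: a, b & take m.-2 q]
     /\ drop m [:: a, b & take m.-2 q ++ drop m.-2 q] = drop m.-2 q.
    by rewrite hm /= take_size_cat // drop_size_cat.
  rewrite !(proj1 (E _ _)) !(proj2 (E _ _)).
  by rewrite (swap_across m2 Hassoc Hcomm).
rewrite !takel_cat ?drop_catL //; apply: IH.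
  rewrite /= size_cat size_drop /=; lia.
by apply: perm_skip; apply: Permutation_app_head; apply: perm_swap.
Qed.
End Red2.
Lemma size_fnseq T n (t : seq T) : size (flatten (nseq n t)) = n * size t.
Proof. by elim: n => //= n IH; rewrite size_cat IH mulSn. Qed.

Section Red3.
Variables (S : Type) (m : nat) (mu : seq S -> S).
Hypotheses (m2 : 2 <= m) (Hassoc : mary_assoc m mu) (Hcomm : mary_comm m mu).
Local Notation red := (red m mu).
Local Notation rperm := (red_perm m2 Hassoc Hcomm).

Lemma red1 t : size t = m -> red 1 t = mu t.
Proof. by move=> h /=; rewrite take_oversize ?h // drop_oversize ?h. Qed.

Lemma red_contract k s1 t s2 : size t = m -> size (s1 ++ t ++ s2) = (k.+1 * m.-1).+1 ->
  red k.+1 (s1 ++ t ++ s2) = red k (s1 ++ mu t :: s2).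
Proof.
move=> ht hs; rewrite (rperm hs (Permutation_app_swap_app _ _ _)) /= !app_cat.
rewrite take_size_cat // drop_size_cat //; apply: rperm.
  move: hs; rewrite !size_cat /= ?size_cat ht mulSn; lia.
by have := Permutation_middle s1 s2 (mu t); rewrite !app_cat.
Qed.

Lemma red_expand j k s1 t s2 : size t = (j * m.-1).+1 ->
  size (s1 ++ t ++ s2) = ((k + j) * m.-1).+1 ->
  red k (s1 ++ red j t :: s2) = red (k + j) (s1 ++ t ++ s2).
Proof.
elim: j k t => [|j IH] k t ht hs.
  by case: t ht hs => [|x [|]] //= _ _; rewrite addn0.
have hmt : m <= size t by rewrite ht mulSn; lia.
rewrite /= IH; first last.
- move: hs; rewrite ?size_cat /= ?size_cat ?size_drop ht; nia.
- by rewrite /= size_drop ht; nia.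
rewrite cat_cons -(red_contract (k:=k+j) (s1:=s1) (t:=take m t)).
- by rewrite (catA (take m t)) cat_take_drop addnS.
- by rewrite size_take; case: ifP; lia.
by rewrite (catA (take m t)) cat_take_drop -addnS.
Qed.

Lemma red_nseq n j k s1 t s2 : size t = (j * m.-1).+1 ->
  size (s1 ++ flatten (nseq n t) ++ s2) = ((k + n * j) * m.-1).+1 ->
  red k (s1 ++ nseq n (red j t) ++ s2) = red (k + n * j) (s1 ++ flatten (nseq n t) ++ s2).
Proof.
elim: n k s1 => [|n IH] k s1 ht hs; first by rewrite addn0.
rewrite /= red_expand //; last first.
  move: hs; rewrite !size_cat /= ?size_cat ?size_nseq ?size_fnseq ht; nia.
rewrite catA IH ?catA ?addnA //; last first.
by move: hs; rewrite !size_cat /= ?size_cat ?size_nseq ?size_fnseq ht; nia.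
Qed.
End Red3.
Lemma perm_eq_Perm (T : eqType) (s t : seq T) : perm_eq s t -> Permutation s t.
Proof.
elim: s t => [|x s IH] t P.
  by move: (perm_size P); case: t P.
have Ht : x \in t by rewrite -(perm_mem P) mem_head.
move: P; case/splitPr: Ht => t1 t2 P.
apply: Permutation_trans (perm_skip x (IH (t1 ++ t2) _)) _.
  by rewrite -(perm_cons x) (perm_trans P) // -cat1s perm_catCA.
by have := Permutation_middle t1 t2 x; rewrite !app_cat.
Qed.

Lemma Perm_flatten T (L L' : seq (seq T)) : Permutation L L' -> Permutation (flatten L) (flatten L').
Proof.
elim=> //= [x l l' _ IH|x y l|l l' l'' _ IH1 _ IH2].
- exact: Permutation_app_head.
- by have := Permutation_app_swap_app y x (flatten l); rewrite !app_cat.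
- exact: Permutation_trans IH1 IH2.
Qed.

Lemma perm_blocks T (g : nat -> seq T) L1 L2 A B :
  flatten (map g L1) = A -> flatten (map g L2) = B -> perm_eq L1 L2 -> Permutation A B.
Proof.
move=> <- <- P; apply: Perm_flatten; apply: Permutation_map; exact: perm_eq_Perm.
Qed.

Lemma fm_cat T (g : nat -> seq T) L1 L2 :
  flatten (map g (L1 ++ L2)) = flatten (map g L1) ++ flatten (map g L2).
Proof. by rewrite map_cat flatten_cat. Qed.

Lemma fm_fnseq T (g : nat -> seq T) n L :
  flatten (map g (flatten (nseq n L))) = flatten (nseq n (flatten (map g L))).
Proof. by elim: n => //= n IH; rewrite fm_cat IH. Qed.

Lemma fm_nseq T (g : nat -> seq T) n i :
  flatten (map g (nseq n i)) = flatten (nseq n (g i)).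
Proof. by rewrite map_nseq. Qed.

Lemma fnseq1 T n (x : T) : flatten (nseq n [:: x]) = nseq n x.
Proof. by elim: n => //= n ->. Qed.

Lemma count_fnseq T (P : pred T) n L : count P (flatten (nseq n L)) = n * count P L.
Proof. by elim: n => //= n IH; rewrite count_cat IH mulSn. Qed.

Ltac fmsimp := rewrite /= ?fm_cat ?fm_fnseq ?fm_nseq /= ?fnseq1 ?cats0 ?catA //.
Ltac cntsimp := apply/permP => P; rewrite /= ?count_cat ?count_fnseq ?count_nseq /= ?count_cat ?count_nseq /=.
From Stdlib Require Import ProofIrrelevance FunctionalExtensionality PropExtensionality.
From Stdlib Require List.

Section Main.
Variables (S : Type) (m : nat) (mu : seq S -> S).
Hypotheses (m2 : 2 <= m) (Hassoc : mary_assoc m mu) (Hcomm : mary_comm m mu).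
Local Notation red := (red m mu).
Local Notation rperm := (red_perm m2 Hassoc Hcomm).
Local Notation sim := (simm m mu).
Local Notation n := m.-1.

Definition cmu (ps : seq (S * S)) := (mu (map fst ps), mu (map snd ps)).
Definition bar (p : S * S) := (mu (p.1 :: nseq n p.2), mu (rcons (nseq n p.1) p.2)).

Lemma sim_refl p : sim p p.
Proof. by exists p.1, p.1. Qed.

Lemma sim_sym p q : sim p q -> sim q p.
Proof. by case=> x [y [E1 E2]]; exists y, x. Qed.

Lemma sim_trans p q r : sim p q -> sim q r -> sim p r.
Proof.
case=> x [y [E1 E2]] [x' [y' [E3 E4]]].
have hn : size (nseq n p.1) = n by rewrite size_nseq.
set v := nseq m.-2 p.1.
have hv : size v = m.-2 by rewrite size_nseq.
have sh := shift m2 Hassoc.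
have sw := swap_across m2 Hassoc Hcomm.
exists (mu (x :: x' :: v)), (mu (y' :: y :: v)); split.
- by rewrite -sh ?size_nseq // E1 sw ?size_nseq // E3 sh ?size_nseq.
- by rewrite -sh ?size_nseq // E2 sw ?size_nseq // E4 sh ?size_nseq.
Qed.

Lemma quot_eq (X Y : quot m mu) : qset X = qset Y -> X = Y.
Proof.
case: X Y => [P HP] [Q HQ] /= E; subst Q; f_equal; exact: proof_irrelevance.
Qed.

Lemma cls_eq p q : sim p q -> cls m mu p = cls m mu q.
Proof.
move=> H; apply: quot_eq => /=; apply: functional_extensionality => r.
apply: propositional_extensionality; split => H2.
- exact: sim_trans (sim_sym H) H2.
- exact: sim_trans H H2.
Qed.

Lemma cls_inj p q : cls m mu p = cls m mu q -> sim p q.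
Proof. by move/(f_equal (@qset _ _ _)) => /= ->; apply: sim_refl. Qed.

Lemma rep_spec (X : quot m mu) : qset X = sim (rep X).
Proof. by rewrite /rep; case: constructive_indefinite_description. Qed.

Lemma cls_rep (X : quot m mu) : cls m mu (rep X) = X.
Proof. by apply: quot_eq; rewrite /= rep_spec. Qed.

Lemma rep_cls p : sim p (rep (cls m mu p)).
Proof. by have := rep_spec (cls m mu p); rewrite /= => ->; apply: sim_refl. Qed.

Ltac sz := do 3 (rewrite /= ?(size_cat, size_fnseq, size_nseq, size_rcons)); nia.

Lemma mu_red t : size t = m -> mu t = red 1 t.
Proof. by move=> h; rewrite red1. Qed.

Lemma G a x c : size c = n ->
  mu (rcons (nseq n (mu (a :: c))) x) = red n (mu (rcons (nseq n a) x) :: flatten (nseq n c)).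
Proof.
move=> hc.
have hac : size (a :: c) = (1 * n).+1 by rewrite /= hc mul1n.
have hm : m = n.+1 by lia.
have e1 : mu (rcons (nseq n (mu (a :: c))) x)
        = red (1 + n * 1) ([::] ++ flatten (nseq n (a :: c)) ++ [:: x]).
  rewrite -red_nseq //; last by sz.
  rewrite (@red1 _ _ mu (a :: c)); last by sz.
  by rewrite red1 /= ?cats1 //; sz.
have e2 : red n (mu (rcons (nseq n a) x) :: flatten (nseq n c))
        = red (n + 1) ([::] ++ rcons (nseq n a) x ++ flatten (nseq n c)).
  rewrite -red_expand //; last first.
    by sz.
    by sz.
  by rewrite red1 //; sz.
rewrite e1 e2 addnC muln1; apply: rperm.
  by sz.
apply: (@perm_blocks _ (nth [::] [:: [:: a]; c; [:: x]])
          (flatten (nseq n [:: 0; 1]) ++ [:: 2]) (nseq n 0 ++ [:: 2] ++ nseq n 1)).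
- by rewrite fm_cat fm_fnseq /= cats0.
- by rewrite !fm_cat !fm_nseq /= fnseq1 -cats1 -catA.
- apply/permP => P; rewrite !count_cat count_fnseq !count_nseq /=; lia.
Qed.

Lemma sim_mu1 a b a' b' c d : sim (a, b) (a', b') -> size c = n -> size d = n ->
  sim (mu (a :: c), mu (b :: d)) (mu (a' :: c), mu (b' :: d)).
Proof. by case=> x [y [/= E1 E2]] hc hd; exists x, y => /=; rewrite !G // E1 E2. Qed.

Lemma Perm_mid T (l1 l2 : seq T) a : Permutation (l1 ++ a :: l2) (a :: l1 ++ l2).
Proof. by have := Permutation_sym (Permutation_middle l1 l2 a); rewrite !app_cat. Qed.

Lemma cmu_mid pre q post : size pre + size post = n ->
  cmu (pre ++ q :: post) = (mu (q.1 :: map fst (pre ++ post)), mu (q.2 :: map snd (pre ++ post))).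
Proof.
move=> h; rewrite /cmu !map_cat /=; congr pair; apply: Hcomm; try exact: Perm_mid;
  rewrite size_cat /= !size_map; lia.
Qed.

Lemma cmu_congr ps qs : List.Forall2 sim ps qs -> forall pre, size pre + size ps = m ->
  sim (cmu (pre ++ ps)) (cmu (pre ++ qs)).
Proof.
elim=> [|p q ps' qs' Hpq _ IH] pre hs; first exact: sim_refl.
apply: (@sim_trans _ (cmu (pre ++ q :: ps'))).
  rewrite !cmu_mid; try (move: hs => /=; lia).
  move: Hpq hs; case: p => a b; case: q => a2 b2 H hs /=; apply: sim_mu1 => //; rewrite size_map size_cat; move: hs => /=; lia.
have := IH (rcons pre q); rewrite -!cats1 -!catA /=; apply; rewrite size_cat /=; move: hs => /=; lia.
Qed.

Lemma qmu_cls ps : size ps = m -> qmu m mu (map (cls m mu) ps) = cls m mu (cmu ps).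
Proof.
move=> h; rewrite /qmu -!map_comp; apply: cls_eq; apply: sim_sym.
have F : List.Forall2 sim ps (map (fun p => rep (cls m mu p)) ps).
  by elim: ps {h} => //= p ps IH; constructor => //; exact: rep_cls.
have := @cmu_congr _ _ F [::] h.
by rewrite /cmu /= -!map_comp.
Qed.

Lemma rexp j k s1 t s2 : size t = (j * m.-1).+1 ->
  size (s1 ++ t ++ s2) = ((k + j) * m.-1).+1 ->
  red k (s1 ++ red j t :: s2) = red (k + j) (s1 ++ t ++ s2).
Proof. exact: red_expand. Qed.

Lemma rnseq k0 j k s1 t s2 : size t = (j * m.-1).+1 ->
  size (s1 ++ flatten (nseq k0 t) ++ s2) = ((k + k0 * j) * m.-1).+1 ->
  red k (s1 ++ nseq k0 (red j t) ++ s2) = red (k + k0 * j) (s1 ++ flatten (nseq k0 t) ++ s2).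
Proof. exact: red_nseq. Qed.

Lemma Perm_fnseq T k (W W' : seq T) : Permutation W W' ->
  Permutation (flatten (nseq k W)) (flatten (nseq k W')).
Proof. by move=> P; elim: k => //= k IH; apply: Permutation_app. Qed.

Lemma E_A t z : size t = m ->
  mu (rcons (nseq n (mu t)) z) = red (1 + n * 1) (flatten (nseq n t) ++ [:: z]).
Proof.
move=> ht.
have := @rnseq n 1 1 [::] t [:: z]; move=> <-; try sz.
rewrite (@red1 _ _ mu t); last by sz.
by rewrite red1 /= ?cats1 //; sz.
Qed.

Lemma mumu t s : size t = m -> size s = n -> mu (mu t :: s) = red 2 (t ++ s).
Proof.
move=> ht hs.
have := @rexp 1 1 [::] t s; move=> <-; try sz.
by rewrite (@red1 _ _ mu t) ?red1 //; sz.
Qed.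

Lemma E_B t s z : size t = m -> size s = n ->
  mu (rcons (nseq n (mu (mu t :: s))) z) = red (1 + n * 2) (flatten (nseq n (t ++ s)) ++ [:: z]).
Proof.
move=> ht hs; rewrite mumu //.
have := @rnseq n 2 1 [::] (t ++ s) [:: z]; move=> <-; try sz.
by rewrite red1 /= ?cats1 //; sz.
Qed.

Lemma E_C z j L : size L = (j * n).+1 ->
  mu (rcons (nseq n z) (red j L)) = red (1 + j) (nseq n z ++ L ++ [::]).
Proof.
move=> hL; rewrite -rexp; try sz.
by rewrite red1 ?cats1 //; sz.
Qed.


Lemma E_D t j L : size t = m -> size L = (j * n).+1 ->
  mu (rcons (nseq n (mu t)) (red j L)) = red (1 + n * 1 + j) (flatten (nseq n t) ++ L ++ [::]).
Proof.
move=> ht hL; rewrite E_A //.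
have := @rexp j (1 + n * 1) (flatten (nseq n t)) L [::]; move=> <- //; sz.
Qed.

Lemma E_R u v : size u = m -> size v = m ->
  mu (mu u :: nseq n (mu v)) = red (1 + 1 + n * 1) (u ++ flatten (nseq n v) ++ [::]).
Proof.
move=> hu hv.
have := @rnseq n 1 (1 + 1) u v [::]; move=> <-; try sz.
have := @rexp 1 1 [::] u (nseq n (red 1 v) ++ [::]); move=> <-; try sz.
rewrite (@red1 _ _ mu u); last sz.
rewrite (@red1 _ _ mu v); last sz.
by rewrite red1 /= ?cats0 //; sz.
Qed.

Lemma mu_nseq_red x : mu (nseq m x) = red 1 (nseq m x).
Proof. by rewrite red1 // size_nseq. Qed.

Lemma bar1 a b x : mu (rcons (nseq n (mu (a :: nseq n b))) (mu (nseq m x)))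
  = mu (mu (rcons (nseq n a) x) :: nseq n (mu (rcons (nseq n b) x))).
Proof.
rewrite mu_nseq_red E_D; try sz.
rewrite E_R; try sz.
rewrite (_ : 1 + 1 + n * 1 = 1 + n * 1 + 1); last lia.
apply: rperm; first sz.
apply: (@perm_blocks _ (nth [::] [:: [:: a]; [:: b]; [:: x]])
          (flatten (nseq n (0 :: nseq n 1)) ++ nseq m 2)
          (nseq n 0 ++ [:: 2] ++ flatten (nseq n (nseq n 1 ++ [:: 2])))).
- by rewrite fm_cat fm_fnseq /= fm_nseq /= fm_nseq /= !fnseq1 cats0.
- by rewrite !fm_cat !fm_nseq fm_fnseq fm_cat fm_nseq /= !fnseq1 cats0 -!cats1 -catA.
- have hm : m = n.+1 by lia.
  apply/permP => P; rewrite hm !count_cat !count_fnseq !count_nseq /= count_cat !count_nseq /=; nia.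
Qed.


Ltac fms := do 3 (rewrite ?(fm_cat, fm_fnseq, fm_nseq) /= ?fnseq1); rewrite ?cats0 -?cats1 -?catA.
Ltac cnt := apply/permP => P; do 2 (rewrite ?(count_cat, count_fnseq, count_nseq) /=); nia.

Lemma bar2 a b x : mu (rcons (nseq n (mu (rcons (nseq n a) b))) (mu (nseq m x)))
  = mu (mu (rcons (nseq n b) x) :: nseq n (mu (rcons (nseq n a) x))).
Proof.
rewrite mu_nseq_red E_D; try sz.
rewrite E_R; try sz.
rewrite (_ : 1 + 1 + n * 1 = 1 + n * 1 + 1); last lia.
apply: rperm; first sz.
apply: (@perm_blocks _ (nth [::] [:: [:: a]; [:: b]; [:: x]])
          (flatten (nseq n (nseq n 0 ++ [:: 1])) ++ nseq m 2)
          (nseq n 1 ++ [:: 2] ++ flatten (nseq n (nseq n 0 ++ [:: 2])))).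
- by fms.
- by fms.
- have hm : m = n.+1 by lia.
  rewrite hm; cnt.
Qed.

Lemma sim_bar p q : sim p q -> sim (bar p) (bar q).
Proof.
case: p q => a b [a' b'] [x [y [/= E1 E2]]].
exists (mu (nseq m x)), (mu (nseq m y)); rewrite /bar /=; split.
- by rewrite bar1 E1 E2 -bar1.
- by rewrite bar2 E1 E2 -bar2.
Qed.

Lemma ident a b : sim (mu (mu (a :: nseq n b) :: nseq n a), mu (mu (rcons (nseq n a) b) :: nseq n b)) (a, b).
Proof.
exists a, (red (n + n) (nseq (n * n) a ++ nseq (n * n) b ++ [:: a])); rewrite /=; split.
- rewrite E_B; try sz. rewrite E_C; try sz.
  rewrite (_ : 1 + (n + n) = 1 + n * 2); last lia.
  apply: rperm; first sz.
  apply: (@perm_blocks _ (nth [::] [:: [:: a]; [:: b]])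
          (flatten (nseq n (0 :: nseq n 1 ++ nseq n 0)) ++ [:: 0])
          (nseq n 0 ++ nseq (n * n) 0 ++ nseq (n * n) 1 ++ [:: 0])).
  + by fms.
  + by fms.
  + cnt.
- rewrite E_B; try sz. rewrite E_C; try sz.
  rewrite (_ : 1 + (n + n) = 1 + n * 2); last lia.
  apply: rperm; first sz.
  apply: (@perm_blocks _ (nth [::] [:: [:: a]; [:: b]])
          (flatten (nseq n (nseq n 0 ++ [:: 1] ++ nseq n 1)) ++ [:: 0])
          (nseq n 1 ++ nseq (n * n) 0 ++ nseq (n * n) 1 ++ [:: 0])).
  + by fms.
  + by fms.
  + cnt.
Qed.


Lemma solve c d xs ys : size xs = n -> size ys = n ->
  sim (mu (mu (c :: ys) :: xs), mu (mu (d :: xs) :: ys)) (c, d).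
Proof.
move=> ha hb.
exists c, (red (n + n) (flatten (nseq n (ys ++ xs)) ++ [:: c])); rewrite /=; split.
- rewrite E_B; try sz. rewrite E_C; try sz.
  rewrite (_ : 1 + (n + n) = 1 + n * 2); last lia.
  apply: rperm; first sz.
  apply: (@perm_blocks _ (nth [::] [:: [:: c]; ys; xs])
          (flatten (nseq n [:: 0; 1; 2]) ++ [:: 0])
          (nseq n 0 ++ flatten (nseq n [:: 1; 2]) ++ [:: 0])).
  + by fms.
  + by fms.
  + cnt.
- rewrite E_B; try sz. rewrite E_C; try sz.
  rewrite (_ : 1 + (n + n) = 1 + n * 2); last lia.
  apply: rperm; first sz.
  apply: (@perm_blocks _ (nth [::] [:: [:: d]; xs; ys; [:: c]])
          (flatten (nseq n [:: 0; 1; 2]) ++ [:: 3])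
          (nseq n 0 ++ flatten (nseq n [:: 2; 1]) ++ [:: 3])).
  + by fms.
  + by fms.
  + cnt.
Qed.

Lemma Cl al W L1 L2 X : size L1 = n -> size L2 = n -> Permutation W (L1 ++ L2) ->
  mu (rcons (nseq n al) (red (n + n) (flatten (nseq n W) ++ [:: X])))
  = red n (mu (rcons (nseq n (mu (al :: L1))) X) :: flatten (nseq n L2)).
Proof.
move=> h1 h2 PW.
have hW : size W = n + n by rewrite (Perm_size PW) size_cat; lia.
rewrite E_C; try sz.
rewrite E_A; try sz.
have := @rexp (1 + n * 1) n [::] (flatten (nseq n (al :: L1)) ++ [:: X]) (flatten (nseq n L2)); move=> -> ; try sz.
rewrite (_ : n + (1 + n * 1) = 1 + (n + n)); last lia.
apply: rperm; first sz.
apply: (Permutation_trans (l' := nseq n al ++ (flatten (nseq n (L1 ++ L2)) ++ [:: X]) ++ [::])).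
  apply: Permutation_app_head; apply: Permutation_app_tail; apply: Permutation_app_tail.
  exact: Perm_fnseq.
apply: (@perm_blocks _ (nth [::] [:: [:: al]; L1; L2; [:: X]])
          (nseq n 0 ++ flatten (nseq n [:: 1; 2]) ++ [:: 3])
          (flatten (nseq n [:: 0; 1]) ++ [:: 3] ++ nseq n 2)).
- by fms.
- by fms.
- cnt.
Qed.

Lemma cancel al be al' be' xs ys : size xs = n -> size ys = n ->
  sim (mu (al :: xs), mu (be :: ys)) (mu (al' :: xs), mu (be' :: ys)) -> sim (al, be) (al', be').
Proof.
move=> ha hb [X [Y [/= E1 E2]]].
exists (red (n + n) (flatten (nseq n (xs ++ ys)) ++ [:: X])),
       (red (n + n) (flatten (nseq n (xs ++ ys)) ++ [:: Y])); rewrite /=; split.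
- by rewrite !(@Cl _ _ xs ys) // E1.
- by rewrite !(@Cl _ _ ys xs) ?E2 //; apply: Permutation_app_comm.
Qed.


Lemma qbar_cls p : qbar m mu (cls m mu p) = cls m mu (bar p).
Proof. by rewrite /qbar; apply: cls_eq; exact: (sim_bar (sim_sym (rep_cls p))). Qed.

Lemma qident (X : quot m mu) i : i < m ->
  qmu m mu (nseq i X ++ qbar m mu X :: nseq (m.-1 - i) X) = X.
Proof.
move=> hi; have EX : X = cls m mu (rep X) by rewrite cls_rep.
move: (rep X) EX => p ->; rewrite qbar_cls.
have -> : nseq i (cls m mu p) ++ cls m mu (bar p) :: nseq (n - i) (cls m mu p)
        = map (cls m mu) (nseq i p ++ bar p :: nseq (n - i) p) by rewrite map_cat /= !map_nseq.
rewrite qmu_cls; last by sz.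
apply: cls_eq; rewrite cmu_mid; last by rewrite !size_nseq; lia.
rewrite !map_cat !map_nseq -!nseqD subnKC; last lia.
case: p => a b; exact: ident.
Qed.

Lemma qassoc_form (ps : seq (S * S)) i : i < m -> size ps = (2 * m).-1 ->
  qmu m mu (take i (map (cls m mu) ps) ++ qmu m mu (take m (drop i (map (cls m mu) ps)))
     :: drop (i + m) (map (cls m mu) ps))
  = cls m mu (mu (take i (map fst ps) ++ mu (take m (drop i (map fst ps))) :: drop (i + m) (map fst ps)),
              mu (take i (map snd ps) ++ mu (take m (drop i (map snd ps))) :: drop (i + m) (map snd ps))).
Proof.
move=> hi hs.
rewrite -map_drop -!map_take -map_drop qmu_cls; last by rewrite size_take size_drop; case: ifP; lia.
rewrite -[_ :: map _ _]/(map (cls m mu) (_ :: _)) -map_cat qmu_cls; last first.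
  by rewrite size_cat /= size_take size_drop; case: ifP; lia.
by rewrite /cmu !map_cat /= !map_take !map_drop.
Qed.

Lemma main_sec :
  ((forall p, sim p p) /\ (forall p q, sim p q -> sim q p) /\
   (forall p q r, sim p q -> sim q r -> sim p r)) /\
  (forall ps : seq (S * S), size ps = m ->
     qmu m mu (map (cls m mu) ps) = cls m mu (mu (map fst ps), mu (map snd ps))) /\
  (forall a b : S,
     qbar m mu (cls m mu (a, b))
     = cls m mu (mu (a :: nseq m.-1 b), mu (rcons (nseq m.-1 a) b))) /\
  (forall (X : quot m mu) (i : nat), i < m ->
     qmu m mu (nseq i X ++ qbar m mu X :: nseq (m.-1 - i) X) = X) /\
  mary_group m (qmu m mu) /\ is_querelement_map m (qmu m mu) (qbar m mu).
Proof.
split; first by split; [exact: sim_refl | split; [exact: sim_sym | exact: sim_trans]].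
split; first exact: qmu_cls.
split; first by move=> a b; rewrite qbar_cls.
split; first exact: qident.
split; last by move=> g i hi; apply: qident.
split.
  move=> i j s hs hi hj.
  have Es : s = map (cls m mu) (map (@rep _ _ _) s) by rewrite -map_comp (eq_map cls_rep) map_id.
  have hps : size (map (@rep _ _ _) s) = (2 * m).-1 by rewrite size_map.
  rewrite Es !qassoc_form //.
  by congr (cls m mu (_, _)); apply: Hassoc => //; rewrite !size_map.
move=> u t g hs.
set pu := map (@rep _ _ _) u; set pt := map (@rep _ _ _) t.
set xs := map fst (pu ++ pt); set ys := map snd (pu ++ pt).
have hxs : size xs = n by rewrite /xs size_map size_cat !size_map.
have hys : size ys = n by rewrite /ys size_map size_cat !size_map.
have KF h : qmu m mu (u ++ h :: t) = cls m mu (mu ((rep h).1 :: xs), mu ((rep h).2 :: ys)).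
  have Eu : u = map (cls m mu) pu by rewrite /pu -map_comp (eq_map cls_rep) map_id.
  have Et : t = map (cls m mu) pt by rewrite /pt -map_comp (eq_map cls_rep) map_id.
  rewrite -{1}(cls_rep h) {1}Eu {1}Et -[_ :: map _ pt]/(map (cls m mu) (_ :: _)) -map_cat qmu_cls.
    by rewrite cmu_mid // /pu /pt !size_map.
  by rewrite size_cat /= /pu /pt !size_map; lia.
have uniq h1 h2 : qmu m mu (u ++ h1 :: t) = qmu m mu (u ++ h2 :: t) -> h1 = h2.
  rewrite !KF => /cls_inj; move: (rep h1) (rep h2) (cls_rep h1) (cls_rep h2).
  move=> [a1 b1] [a2 b2] <- <- /= H; apply: cls_eq; exact: cancel H.
case Eg: (rep g) => [c d].
have Eg' : g = cls m mu (c, d) by rewrite -Eg cls_rep.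
have H0 : qmu m mu (u ++ cls m mu (mu (c :: ys), mu (d :: xs)) :: t) = g.
  rewrite KF Eg'; apply: cls_eq.
  move: (rep_cls (mu (c :: ys), mu (d :: xs))).
  case: (rep _) => q1 q2 Hq /=.
  apply: sim_trans (solve _ _ hxs hys).
  by apply: sim_mu1 => //; apply: sim_sym.
exists (cls m mu (mu (c :: ys), mu (d :: xs))); split => // h' H'.
by apply: uniq; rewrite H0 H'.
Qed.

End Main.

Theorem mainTheorem7 (S : Type) (m : nat) (mu : seq S -> S) :
  2 <= m -> mary_assoc m mu -> mary_comm m mu ->
  (* ~_m is an equivalence relation *)
  ((forall p, simm m mu p p) /\
   (forall p q, simm m mu p q -> simm m mu q p) /\
   (forall p q r, simm m mu p q -> simm m mu q r -> simm m mu p r)) /\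
  (* the componentwise operation is well defined on classes *)
  (forall ps : seq (S * S), size ps = m ->
     qmu m mu (map (cls m mu) ps)
     = cls m mu (mu (map fst ps), mu (map snd ps))) /\
  (* the unary operation is well defined on classes *)
  (forall a b : S,
     qbar m mu (cls m mu (a, b))
     = cls m mu (mu (a :: nseq m.-1 b), mu (rcons (nseq m.-1 a) b))) /\
  (* mu~[X^{m-1}, bar X] = X, with bar X in any place *)
  (forall (X : quot m mu) (i : nat), i < m ->
     qmu m mu (nseq i X ++ qbar m mu X :: nseq (m.-1 - i) X) = X) /\
  (* the quotient is an m-ary group with querelement map qbar *)
  mary_group m (qmu m mu) /\ is_querelement_map m (qmu m mu) (qbar m mu).
Proof. move=> h1 h2 h3; exact: (main_sec h1 h2 h3). Qed.
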